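(* Let $P_1,P_2,P_3$ be the vertices of an equilateral triangle in $\mathbb{C}$, and let $$F_1(z)=\tfrac{z+P_1}{2},\qquad F_2(z)=\tfrac{z+P_2}{2},\qquad F_3(z)=\tfrac{3P_3-z}{2}.$$ Put $Q_1=F_3(P_1)=\tfrac{3P_3-P_1}{2}$, $Q_2=F_3(P_2)=\tfrac{3P_3-P_2}{2}$ and $V_0=\{P_1,P_2,P_3,Q_1,Q_2\}$. Let $$k=\frac{3+\sqrt{41}}{16},\qquad R_2=1,\qquad R_1=\frac{\sqrt{41}-1}{4}.$$ Define the level-1 network $G_1$ on vertex set $V_0$ with the following six edges and resistances: $P_1P_2$ has resistance $R_1$; $P_1P_3$ and $P_2P_3$ have resistance $R_2$; $Q_1Q_2$ has resistance $kR_1$; $Q_1P_3$ and $Q_2P_3$ have resistance $kR_2$. Define the level-2 network $G_2$ on vertex set $V_1=F_1(V_0)\cup F_2(V_0)\cup F_3(V_0)\subset\mathbb{C}$ (points are identified when they coincide as points of $\mathbb{C}$) whose edges are, for each $i\in\{1,2,3\}$ and each edge $pq$ of $G_1$ with resistance $r$, an edge $F_i(p)F_i(q)$ with the same resistance $r$ (parallel edges, if any, combine by adding conductances). Then for all $p,q\in V_0$, $$R^{G_1}_{\mathrm{eff}}(p,q)=k\,R^{G_2}_{\mathrm{eff}}(p,q).$$ Equivalently, the trace (Schur complement onto $V_0$) of the conductance Laplacian of $G_2$ equals $k$ times the conductance Laplacian of $G_1$.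
   Context: A resistance network is a finite vertex set with edges carrying positive resistances $r$ (conductance $c=1/r$); its energy is $\mathscr{E}(u)=\sum_{\text{edges }pq} c_{pq}(u(p)-u(q))^2$ for $u$ a real function on the vertices. For vertices $p\neq q$ of a connected network, the effective resistance is defined by $1/R_{\mathrm{eff}}(p,q)=\inf\{\mathscr{E}(u): u(p)=1,\ u(q)=0\}$, and $R_{\mathrm{eff}}(p,p)=0$. The trace of the network onto a subset $V$ of vertices is the quadratic form $u\mapsto\inf\{\mathscr{E}(g): g|_{V}=u\}$ on functions on $V$. The fractalina is the attractor of the iterated function system $\{F_1,F_2,F_3\}$. *)

(* Defs.v *)
From Stdlib Require Import Reals Lra List Classical ClassicalEpsilon.
Import ListNotations.
Open Scope R_scope.

(* Complex numbers represented as pairs of reals (x, y) = x + i y. *)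
Definition Cpt := (R * R)%type.
Definition Cadd (z w : Cpt) : Cpt := (fst z + fst w, snd z + snd w).
Definition Cscal (a : R) (z : Cpt) : Cpt := (a * fst z, a * snd z).
Definition Csub (z w : Cpt) : Cpt := (fst z - fst w, snd z - snd w).
Definition Cabs (z : Cpt) : R := sqrt (fst z ^ 2 + snd z ^ 2).
Definition Cdist (z w : Cpt) : R := Cabs (Csub z w).

Definition equilateral (P1 P2 P3 : Cpt) : Prop :=
  P1 <> P2 /\ Cdist P1 P2 = Cdist P2 P3 /\ Cdist P2 P3 = Cdist P3 P1.

Definition F1 (P1 : Cpt) (z : Cpt) : Cpt := Cscal (1/2) (Cadd z P1).
Definition F2 (P2 : Cpt) (z : Cpt) : Cpt := Cscal (1/2) (Cadd z P2).
Definition F3 (P3 : Cpt) (z : Cpt) : Cpt := Cscal (1/2) (Csub (Cscal 3 P3) z).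

Definition kk : R := (3 + sqrt 41) / 16.
Definition Res2 : R := 1.
Definition Res1 : R := (sqrt 41 - 1) / 4.

(* A resistance network: a list of edges (p, q, r), r the resistance.
   Vertices are points of the plane, so coinciding points are identified;
   parallel edges add conductances since energies add. *)
Definition network := list (Cpt * Cpt * R).

Definition energy (G : network) (u : Cpt -> R) : R :=
  fold_right (fun e acc => / (snd e) * (u (fst (fst e)) - u (snd (fst e))) ^ 2 + acc) 0 G.

Definition is_glb (S : R -> Prop) (m : R) : Prop :=
  (forall x, S x -> m <= x) /\ (forall m', (forall x, S x -> m' <= x) -> m' <= m).

Definition Rinf (S : R -> Prop) : R :=
  epsilon (inhabits 0) (fun m => is_glb S m).

(* Effective resistance: 1/R(p,q) = inf { E(u) : u p = 1, u q = 0 }, R(p,p) = 0.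
   Functions u are taken on all of the plane; only their values at vertices matter. *)
Definition Reff (G : network) (p q : Cpt) : R :=
  if excluded_middle_informative (p = q) then 0
  else / Rinf (fun e => exists u : Cpt -> R, u p = 1 /\ u q = 0 /\ e = energy G u).

Definition Q1 (P1 P3 : Cpt) : Cpt := F3 P3 P1.
Definition Q2 (P2 P3 : Cpt) : Cpt := F3 P3 P2.

Definition V0 (P1 P2 P3 : Cpt) : list Cpt := [P1; P2; P3; Q1 P1 P3; Q2 P2 P3].

Definition G1 (P1 P2 P3 : Cpt) : network :=
  [ (P1, P2, Res1); (P1, P3, Res2); (P2, P3, Res2);
    (Q1 P1 P3, Q2 P2 P3, kk * Res1);
    (Q1 P1 P3, P3, kk * Res2); (Q2 P2 P3, P3, kk * Res2) ].

Definition map_edge (f : Cpt -> Cpt) (e : Cpt * Cpt * R) : Cpt * Cpt * R :=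
  (f (fst (fst e)), f (snd (fst e)), snd e).

Definition G2 (P1 P2 P3 : Cpt) : network :=
  map (map_edge (F1 P1)) (G1 P1 P2 P3) ++
  map (map_edge (F2 P2)) (G1 P1 P2 P3) ++
  map (map_edge (F3 P3)) (G1 P1 P2 P3).

(* Main.v *)
Require Import Defs.
From Stdlib Require Import Reals List.
From Stdlib Require Import Lra Lia Classical ClassicalEpsilon.
Import ListNotations.
Open Scope R_scope.

Definition enI (G : list (nat*nat*R)) (v : nat -> R) : R :=
  fold_right (fun e acc => / (snd e) * (v (fst (fst e)) - v (snd (fst e))) ^ 2 + acc) 0 G.

Definition G1idx : list (nat*nat*R) :=
  [(0%nat,1%nat,Res1);(0%nat,2%nat,Res2);(1%nat,2%nat,Res2);(3%nat,4%nat,kk*Res1);(3%nat,2%nat,kk*Res2);(4%nat,2%nat,kk*Res2)].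
Definition mapI (m : nat -> nat) (e : nat*nat*R) : nat*nat*R :=
  (m (fst (fst e)), m (snd (fst e)), snd e).
Definition m1 (i : nat) : nat := match i with 0 => 0 | 1%nat => 5 | 2%nat => 6 | 3%nat => 8 | _ => 10 end%nat.
Definition m2 (i : nat) : nat := match i with 0 => 5 | 1%nat => 1 | 2%nat => 7 | 3%nat => 11 | _ => 9 end%nat.
Definition m3 (i : nat) : nat := match i with 0 => 3 | 1%nat => 4 | 2%nat => 2 | 3%nat => 8 | _ => 9 end%nat.
Definition G2idx := map (mapI m1) G1idx ++ map (mapI m2) G1idx ++ map (mapI m3) G1idx.

Definition s41 := sqrt 41.
Definition Hx (v : nat -> R) (i : nat) : R :=
  let s := s41 in
  match i with
  | 5%nat => (-7+3*s)/32 * v 0%nat + (-7+3*s)/32 * v 1%nat + (23-3*s)/16 * v 2%nat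
  | 6%nat => (11+s)/40 * v 0%nat + (-7+3*s)/80 * v 1%nat + (13-s)/16 * v 2%nat
  | 7%nat => (-7+3*s)/80 * v 0%nat + (11+s)/40 * v 1%nat + (13-s)/16 * v 2%nat
  | 8%nat => (51+s)/256 * v 0%nat + (-1+5*s)/256 * v 1%nat + (103-3*s)/128 * v 2%nat
  | 9%nat => (-1+5*s)/256 * v 0%nat + (51+s)/256 * v 1%nat + (103-3*s)/128 * v 2%nat
  | 10%nat => (25+3*s)/128 * v 0%nat + (-27+7*s)/128 * v 1%nat + (65-5*s)/64 * v 2%nat
  | 11%nat => (-27+7*s)/128 * v 0%nat + (25+3*s)/128 * v 1%nat + (65-5*s)/64 * v 2%nat
  | _ => v i
  end.

Definition Wx (v : nat -> R) (i : nat) : R :=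
  match i with 0%nat|1%nat|2%nat|3%nat|4%nat => 0 | _ => v i - Hx v i end.

Lemma s41_sq : s41 * s41 = 41.
Proof. unfold s41. apply sqrt_sqrt. lra. Qed.
Lemma s41_pos : 6 < s41.
Proof. pose proof s41_sq. assert (0 <= s41) by (unfold s41; apply sqrt_pos). nra. Qed.

Lemma c1E : / Res1 = (s41 + 1)/10.
Proof. unfold Res1. fold s41. pose proof s41_sq; pose proof s41_pos. field_simplify_eq; [nra| lra]. Qed.
Lemma c2E : / Res2 = 1.
Proof. unfold Res2. lra. Qed.
Lemma c3E : / (kk * Res1) = (19 - s41)/10.
Proof. unfold Res1, kk. fold s41. pose proof s41_sq; pose proof s41_pos. field_simplify_eq; [nra| nra]. Qed.
Lemma c4E : / (kk * Res2) = (s41 - 3)/2.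
Proof. unfold Res2, kk. fold s41. pose proof s41_sq; pose proof s41_pos. field_simplify_eq; [nra| nra]. Qed.
Lemma kkE : kk = (3 + s41)/16.
Proof. reflexivity. Qed.

Lemma alg (v : nat -> R) : enI G2idx v = kk * enI G1idx v + enI G2idx (Wx v).
Proof.
  unfold enI, G2idx, G1idx, Wx, Hx. simpl.
  rewrite c1E, c2E, c3E, c4E, kkE.
  pose proof s41_sq.
  generalize (v 0%nat) (v 1%nat) (v 2%nat) (v 3%nat) (v 4%nat) (v 5%nat) (v 6%nat)
    (v 7%nat) (v 8%nat) (v 9%nat) (v 10%nat) (v 11%nat) s41 H.
  intros v0 v1 v2 v3 v4 v5 v6 v7 v8 v9 v10 v11 s Hs.
  apply Rminus_diag_uniq.
  transitivity ((s*s-41)*((-3773/1638400)*s*v0^2 + (-3397/819200)*s*v0*v1 + (717/81920)*s*v0*v2 + (-3773/1638400)*s*v1^2 + (717/81920)*s*v1*v2 + (-717/81920)*s*v2^2 + (-19623/1638400)*v0^2 + (-447/819200)*v0*v1 + (-19623/1638400)*v1^2 + (-1/40)*v3^2 + (-1/80)*v3*v4 + (-1/40)*v4^2 + (1/16)*v2*v3 + (2857/81920)*v2^2 + (1/16)*v2*v4 + (-597/16384)*v0*v2 + (-597/16384)*v1*v2 + (3/80)*v0*v5 + (3/80)*v1*v5 + (-3/40)*v2*v5 + (-13/1280)*v0*v8 + (7/1280)*v1*v8 + (3/640)*v2*v8 + (-7/1280)*v0*v10 + (13/1280)*v1*v10 + (-3/640)*v2*v10 + (29/1280)*v0*v6 +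 (1/1280)*v1*v6 + (-3/128)*v2*v6 + (13/1280)*v0*v11 + (-7/1280)*v1*v11 + (-3/640)*v2*v11 + (7/1280)*v0*v9 + (-13/1280)*v1*v9 + (3/640)*v2*v9 + (1/1280)*v0*v7 + (29/1280)*v1*v7 + (-3/128)*v2*v7)).
  - field.
  - rewrite Hs. ring.
Qed.

Definition pt (P1 P2 P3 : Cpt) (a b : R) : Cpt :=
  (fst P3 + a * (fst P1 - fst P3) + b * (fst P2 - fst P3),
   snd P3 + a * (snd P1 - snd P3) + b * (snd P2 - snd P3)).

Definition ptOf (P1 P2 P3 : Cpt) (i : nat) : Cpt :=
  match i with
  | 0%nat => pt P1 P2 P3 1 0
  | 1%nat => pt P1 P2 P3 0 1
  | 2%nat => pt P1 P2 P3 0 0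
  | 3%nat => pt P1 P2 P3 (-1/2) 0
  | 4%nat => pt P1 P2 P3 0 (-1/2)
  | 5%nat => pt P1 P2 P3 (1/2) (1/2)
  | 6%nat => pt P1 P2 P3 (1/2) 0
  | 7%nat => pt P1 P2 P3 0 (1/2)
  | 8%nat => pt P1 P2 P3 (1/4) 0
  | 9%nat => pt P1 P2 P3 0 (1/4)
  | 10%nat => pt P1 P2 P3 (1/2) (-1/4)
  | 11%nat => pt P1 P2 P3 (-1/4) (1/2)
  | _ => pt P1 P2 P3 0 0
  end.

Definition cross (P1 P2 P3 : Cpt) : R :=
  (fst P1 - fst P3) * (snd P2 - snd P3) - (snd P1 - snd P3) * (fst P2 - fst P3).

Lemma pt_inj P1 P2 P3 a b a' b' : cross P1 P2 P3 <> 0 ->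
  pt P1 P2 P3 a b = pt P1 P2 P3 a' b' -> a = a' /\ b = b'.
Proof.
  intros Hc E. unfold pt in E. injection E as E1 E2.
  set (ax := fst P1 - fst P3) in *. set (bx := fst P2 - fst P3) in *.
  set (ay := snd P1 - snd P3) in *. set (by' := snd P2 - snd P3) in *.
  assert (F1 : (a - a') * ax + (b - b') * bx = 0) by lra.
  assert (F2 : (a - a') * ay + (b - b') * by' = 0) by lra.
  assert (G1 : (a - a') * cross P1 P2 P3 = 0).
  { transitivity (((a - a') * ax + (b - b') * bx) * by' - ((a - a') * ay + (b - b') * by') * bx).
    - unfold cross; fold ax bx ay by'. ring.
    - rewrite F1, F2. ring. }
  assert (G2 : (b - b') * cross P1 P2 P3 = 0).
  { transitivity (((a - a') * ay + (b - b') * by') * ax - ((a - a') * ax + (b - b') * bx) * ay).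
    - unfold cross; fold ax bx ay by'. ring.
    - rewrite F1, F2. ring. }
  apply Rmult_integral in G1. apply Rmult_integral in G2.
  destruct G1 as [G1|G1]; [|contradiction]. destruct G2 as [G2|G2]; [|contradiction].
  split; lra.
Qed.

Lemma sqrt_eq_sq a b : 0 <= a -> 0 <= b -> sqrt a = sqrt b -> a = b.
Proof. intros. apply sqrt_inj; auto. Qed.

Lemma cross_nz P1 P2 P3 : equilateral P1 P2 P3 -> cross P1 P2 P3 <> 0.
Proof.
  destruct P1 as [x1 y1], P2 as [x2 y2], P3 as [x3 y3].
  unfold equilateral, Cdist, Cabs, Csub, cross; simpl.
  intros [Hne [Ha Hb]].
  apply sqrt_eq_sq in Ha; try nra. apply sqrt_eq_sq in Hb; try nra.
  assert (Hpos : 0 < (x1 - x2) ^ 2 + (y1 - y2) ^ 2).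
  { destruct (Req_dec x1 x2); destruct (Req_dec y1 y2); try nra.
    exfalso. apply Hne. subst. reflexivity. }
  set (ax := x1 - x3) in *. set (ay := y1 - y3) in *.
  set (bx := x2 - x3) in *. set (by' := y2 - y3) in *.
  set (t := (x1 - x2) ^ 2 + (y1 - y2) ^ 2) in *.
  assert (Hb2 : bx^2 + by'^2 = t) by (unfold bx, by', t in *; nra).
  assert (Ha2 : ax^2 + ay^2 = t) by (unfold ax, ay, t in *; nra).
  assert (Hd : ax*bx + ay*by' = t/2) by (unfold ax, ay, bx, by', t in *; nra).
  assert (Hid : (ax*by' - ay*bx)^2 = (ax^2+ay^2)*(bx^2+by'^2) - (ax*bx+ay*by')^2) by ring.
  rewrite Ha2, Hb2, Hd in Hid.
  intro H0. rewrite H0 in Hid. nra.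
  all: apply Rplus_le_le_0_compat; rewrite Rmult_1_r; apply Rle_0_sqr.
Qed.

Definition toPt (f : nat -> Cpt) (e : nat*nat*R) : Cpt*Cpt*R :=
  (f (fst (fst e)), f (snd (fst e)), snd e).

Lemma energy_map (f : nat -> Cpt) G u :
  energy (map (toPt f) G) u = enI G (fun i => u (f i)).
Proof. induction G as [|e G IH]; simpl; [reflexivity|]. rewrite IH. reflexivity. Qed.

Ltac splitl := repeat match goal with
  | |- (_ :: _) = (_ :: _) => f_equal
  | |- (_, _) = (_, _) => f_equal
  | |- @nil _ = @nil _ => reflexivity end.

Lemma G1_eq P1 P2 P3 : G1 P1 P2 P3 = map (toPt (ptOf P1 P2 P3)) G1idx.
Proof.
  destruct P1 as [x1 y1], P2 as [x2 y2], P3 as [x3 y3].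
  unfold G1, G1idx, Q1, Q2, F3, Cscal, Csub, Cadd, toPt; simpl. unfold pt; simpl.
  splitl; try reflexivity; lra.
Qed.

Lemma G2_eq P1 P2 P3 : G2 P1 P2 P3 = map (toPt (ptOf P1 P2 P3)) G2idx.
Proof.
  destruct P1 as [x1 y1], P2 as [x2 y2], P3 as [x3 y3].
  unfold G2, G1, G2idx, G1idx, map_edge, Q1, Q2, F1, F2, F3, Cscal, Csub, Cadd, toPt; simpl.
  unfold pt; simpl.
  splitl; try reflexivity; lra.
Qed.

Lemma enI_nonneg G v : (forall e, In e G -> 0 < snd e) -> 0 <= enI G v.
Proof.
  induction G as [|e G IH]; simpl; intros H; [lra|].
  apply Rplus_le_le_0_compat.
  - apply Rmult_le_pos. left. apply Rinv_0_lt_compat. apply H; auto.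
    apply pow2_ge_0.
  - apply IH. intros; apply H; auto.
Qed.

Lemma Res1_pos : 0 < Res1.
Proof. unfold Res1. fold s41. pose proof s41_pos. lra. Qed.
Lemma kk_pos : 0 < kk.
Proof. rewrite kkE. pose proof s41_pos. lra. Qed.

Lemma G1idx_pos : forall e, In e G1idx -> 0 < snd e.
Proof.
  pose proof Res1_pos; pose proof kk_pos.
  assert (0 < Res2) by (unfold Res2; lra).
  unfold G1idx; simpl; intros e He;
  repeat (destruct He as [He|He]; [subst e; simpl; try nra|]); contradiction.
Qed.

Lemma G2idx_pos : forall e, In e G2idx -> 0 < snd e.
Proof.
  unfold G2idx. intros e He. repeat rewrite in_app_iff in He.
  destruct He as [He|[He|He]]; apply in_map_iff in He; destruct He as [e' [<- He']];
  unfold mapI; cbn [snd]; apply G1idx_pos; exact He'.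
Qed.

Lemma enI_ext G f g : (forall e, In e G -> f (fst (fst e)) = g (fst (fst e)) /\ f (snd (fst e)) = g (snd (fst e))) ->
  enI G f = enI G g.
Proof.
  induction G as [|e G IH]; simpl; intros H; [reflexivity|].
  destruct (H e (or_introl eq_refl)) as [-> ->]. rewrite IH; auto.
Qed.

Lemma G2idx_range : forall e, In e G2idx -> (fst (fst e) < 12)%nat /\ (snd (fst e) < 12)%nat.
Proof.
  unfold G2idx, G1idx; simpl; intros e He;
  repeat (destruct He as [He|He]; [subst e; simpl; lia|]); contradiction.
Qed.

Definition ext (P1 P2 P3 : Cpt) (u : Cpt -> R) (z : Cpt) : R :=
  let v := fun i => u (ptOf P1 P2 P3 i) in
  if excluded_middle_informative (z = ptOf P1 P2 P3 5) then Hx v 5 else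
  if excluded_middle_informative (z = ptOf P1 P2 P3 6) then Hx v 6 else
  if excluded_middle_informative (z = ptOf P1 P2 P3 7) then Hx v 7 else
  if excluded_middle_informative (z = ptOf P1 P2 P3 8) then Hx v 8 else
  if excluded_middle_informative (z = ptOf P1 P2 P3 9) then Hx v 9 else
  if excluded_middle_informative (z = ptOf P1 P2 P3 10) then Hx v 10 else
  if excluded_middle_informative (z = ptOf P1 P2 P3 11) then Hx v 11 else u z.

Lemma pt_eq P1 P2 P3 a b a' b' : a = a' -> b = b' -> pt P1 P2 P3 a b = pt P1 P2 P3 a' b'.
Proof. intros -> ->; reflexivity. Qed.

Ltac dec Hc := repeat match goal with
  |- context [excluded_middle_informative (pt ?P1 ?P2 ?P3 ?a ?b = pt _ _ _ ?c ?d)] =>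
    let E := fresh "E" in
    destruct (excluded_middle_informative (pt P1 P2 P3 a b = pt P1 P2 P3 c d)) as [E|E];
    [ apply pt_inj in E; [destruct E; try (exfalso; lra) | exact Hc]
    | try (exfalso; apply E; apply pt_eq; lra) ] end.

Lemma ext_eval P1 P2 P3 u i : cross P1 P2 P3 <> 0 -> (i < 12)%nat ->
  ext P1 P2 P3 u (ptOf P1 P2 P3 i) = Hx (fun j => u (ptOf P1 P2 P3 j)) i.
Proof.
  intros Hc Hi. unfold ext.
  do 12 (destruct i as [|i]; [cbn [ptOf]; dec Hc; reflexivity|]). lia.
Qed.

Lemma glb_exists (S : R -> Prop) : (exists x, S x) -> (forall x, S x -> 0 <= x) ->
  exists m, is_glb S m.
Proof.
  intros [x0 Hx0] Hpos.
  destruct (completeness (fun x => S (- x))) as [m [Hub Hlub]].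
  - exists 0. intros x Hx. specialize (Hpos _ Hx). lra.
  - exists (- x0). rewrite Ropp_involutive. exact Hx0.
  - exists (- m). split.
    + intros x Hx. assert (- x <= m) by (apply Hub; rewrite Ropp_involutive; exact Hx). lra.
    + intros m' Hm'. assert (m <= - m').
      { apply Hlub. intros y Hy. specialize (Hm' _ Hy). lra. }
      lra.
Qed.

Lemma Rinf_glb S m : is_glb S m -> Rinf S = m.
Proof.
  intros Hm. unfold Rinf.
  assert (He : exists m, is_glb S m) by (exists m; exact Hm).
  pose proof (epsilon_spec (inhabits 0) (fun m => is_glb S m) He) as Hs.
  set (e := epsilon _ _) in *.
  destruct Hm as [H1 H2], Hs as [H3 H4].
  apply Rle_antisym; [apply H2 | apply H4]; assumption.
Qed.

Lemma inf_scale (E1 E2 : (Cpt -> R) -> R) (k : R) (p q : Cpt) :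
  p <> q -> 0 < k -> (forall u, 0 <= E1 u) -> (forall u, k * E1 u <= E2 u) ->
  (forall u, exists u', u' p = u p /\ u' q = u q /\ E2 u' = k * E1 u) ->
  Rinf (fun e => exists u : Cpt -> R, u p = 1 /\ u q = 0 /\ e = E2 u)
  = k * Rinf (fun e => exists u : Cpt -> R, u p = 1 /\ u q = 0 /\ e = E1 u).
Proof.
  intros Hpq Hk H1 H12 Hex.
  set (S1 := fun e => exists u : Cpt -> R, u p = 1 /\ u q = 0 /\ e = E1 u).
  set (S2 := fun e => exists u : Cpt -> R, u p = 1 /\ u q = 0 /\ e = E2 u).
  destruct (glb_exists S1) as [m1 Hm1].
  - exists (E1 (fun z => if excluded_middle_informative (z = p) then 1 else 0)).
    eexists; split; [|split; [|reflexivity]].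
    + cbv beta; destruct (excluded_middle_informative (p = p)); congruence.
    + cbv beta; destruct (excluded_middle_informative (q = p)); congruence.
  - intros x [u [_ [_ ->]]]. apply H1.
  - rewrite (Rinf_glb S1 m1 Hm1). apply Rinf_glb.
    destruct Hm1 as [Hl Hg]. split.
    + intros x [u [Hp [Hq ->]]].
      assert (m1 <= E1 u) by (apply Hl; exists u; auto).
      specialize (H12 u). nra.
    + intros m' Hm'.
      assert (m' / k <= m1).
      { apply Hg. intros x [u [Hp [Hq ->]]].
        destruct (Hex u) as [u' [Hp' [Hq' HE]]].
        assert (m' <= E2 u') by (apply Hm'; exists u'; rewrite Hp', Hq'; auto).
        rewrite HE in H. apply Rmult_le_reg_l with k; auto.
        field_simplify; [lra | lra]. }
      apply Rmult_le_compat_l with (r := k) in H; [|lra].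
      replace (k * (m' / k)) with m' in H by (field; lra). exact H.
Qed.

Lemma V0_ptOf P1 P2 P3 p : In p (V0 P1 P2 P3) -> exists i, (i < 5)%nat /\ p = ptOf P1 P2 P3 i.
Proof.
  destruct P1 as [x1 y1], P2 as [x2 y2], P3 as [x3 y3].
  unfold V0, Q1, Q2, F3, Cscal, Csub; simpl.
  intros [H|[H|[H|[H|[H|[]]]]]]; subst p;
  [exists 0%nat|exists 1%nat|exists 2%nat|exists 3%nat|exists 4%nat];
  (split; [lia|]); cbn [ptOf]; unfold pt; simpl; f_equal; lra.
Qed.

Theorem mainTheorem1 (P1 P2 P3 : Cpt) (Heq : equilateral P1 P2 P3) :
  forall p q : Cpt, In p (V0 P1 P2 P3) -> In q (V0 P1 P2 P3) ->
    Reff (G1 P1 P2 P3) p q = kk * Reff (G2 P1 P2 P3) p q.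
Proof.
  intros p q Hp Hq.
  pose proof (cross_nz _ _ _ Heq) as Hc.
  unfold Reff. destruct (excluded_middle_informative (p = q)) as [E|Hpq]; [ring|].
  assert (HE1 : forall u, energy (G1 P1 P2 P3) u = enI G1idx (fun i => u (ptOf P1 P2 P3 i))).
  { intro u. rewrite G1_eq. apply energy_map. }
  assert (HE2 : forall u, energy (G2 P1 P2 P3) u = enI G2idx (fun i => u (ptOf P1 P2 P3 i))).
  { intro u. rewrite G2_eq. apply energy_map. }
  rewrite (inf_scale (energy (G1 P1 P2 P3)) (energy (G2 P1 P2 P3)) kk p q Hpq kk_pos).
  - set (m := Rinf _).
    destruct (Req_dec m 0) as [-> | Hm].
    + rewrite Rmult_0_r, Rinv_0. ring.
    + pose proof kk_pos. field. split; lra.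
  - intro u. rewrite HE1. apply enI_nonneg, G1idx_pos.
  - intro u. rewrite HE1, HE2, alg.
    pose proof (enI_nonneg G2idx (Wx (fun i => u (ptOf P1 P2 P3 i))) G2idx_pos). lra.
  - intro u. exists (ext P1 P2 P3 u).
    destruct (V0_ptOf _ _ _ _ Hp) as [i [Hi ->]].
    destruct (V0_ptOf _ _ _ _ Hq) as [j [Hj ->]].
    rewrite !ext_eval by (auto; lia).
    split; [destruct i as [|[|[|[|[|]]]]]; try lia; reflexivity|].
    split; [destruct j as [|[|[|[|[|]]]]]; try lia; reflexivity|].
    rewrite HE2, HE1.
    set (v := fun i => u (ptOf P1 P2 P3 i)).
    transitivity (enI G2idx (Hx v)).
    + apply enI_ext. intros e He. destruct (G2idx_range e He).
      split; apply ext_eval; auto.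
    + rewrite alg.
      assert (enI G1idx (Hx v) = enI G1idx v) as -> by reflexivity.
      assert (enI G2idx (Wx (Hx v)) = 0) as ->.
      { unfold enI, G2idx, G1idx, Wx, Hx. simpl. ring. }
      ring.
Qed.
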